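(* There exist $u_0\in\exp L^2(\mathbb{R}^N)$ and a constant $C>0$ such that $$\|e^{-t\Delta^2}u_0-u_0\|_{\exp L^2}\geq C\quad\text{for all }t>0.$$
   Context: $e^{-t\Delta^2}$ denotes the biharmonic heat semigroup on $\mathbb{R}^N$: $e^{-t\Delta^2}\varphi=E_t\star\varphi$ with $E_t(x)=(2\pi)^{-N}\int_{\mathbb{R}^N}e^{-t|\xi|^4}e^{ix\cdot\xi}\,d\xi$. The Orlicz space $\exp L^2(\mathbb{R}^N)$ is the set of $u\in L^1_{loc}(\mathbb{R}^N)$ such that $\int_{\mathbb{R}^N}(e^{|u(x)|^2/\alpha^2}-1)\,dx<\infty$ for some $\alpha>0$, with the Luxemburg norm $\|u\|_{\exp L^2}=\inf\{\alpha>0:\int_{\mathbb{R}^N}(e^{|u(x)|^2/\alpha^2}-1)\,dx\leq 1\}$. *)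

(* Defs.v *)
(* R^N is modelled as N.-tuple R,
   equipped (by the library) with the product Borel sigma-algebra generated
   by the coordinate projections. *)
From HB Require Import structures.
From mathcomp Require Import all_boot all_order all_algebra.
From mathcomp Require Import all_classical all_reals all_analysis.
Set Implicit Arguments. Unset Strict Implicit. Unset Printing Implicit Defensive.
Import Order.TTheory GRing.Theory Num.Theory.
Import numFieldNormedType.Exports.
Local Open Scope classical_set_scope.
Local Open Scope ring_scope.

Section RN.
Variables (R : realType) (N : nat).
Notation RN := (N.-tuple R).

Definition subRN (x y : RN) : RN := [tuple tnth x i - tnth y i | i < N].
Definition dotRN (x y : RN) : R := \sum_(i < N) tnth x i * tnth y i.
Definition sqnormRN (x : RN) : R := dotRN x x.

(* mu is Lebesgue measure on the Borel sets of R^N: the (unique) measure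
   giving each half-open box prod_i ]a_i, b_i] its volume. *)
Definition is_lebesgue_RN (mu : {measure set RN -> \bar R}) : Prop :=
  forall a b : 'I_N -> R, (forall i, a i <= b i) ->
    mu [set x : RN | forall i, a i < tnth x i <= b i] =
    (\prod_(i < N) (b i - a i))%:E.

Variable mu : {measure set RN -> \bar R}.

Definition expL2_modular (g : RN -> R) (alpha : R) : \bar R :=
  (\int[mu]_x (expR (g x ^+ 2 / alpha ^+ 2) - 1)%:E)%E.

(* Luxemburg norm  inf {alpha > 0 : modular <= 1}  (= +oo if the set is empty) *)
Definition expL2_norm (g : RN -> R) : \bar R :=
  ereal_inf [set alpha%:E | alpha in
              [set alpha : R | 0 < alpha /\ (expL2_modular g alpha <= 1)%E]].

Definition L1loc (u : RN -> R) : Prop :=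
  measurable_fun setT u /\
  forall r : R, 0 < r ->
    (\int[mu]_(x in [set x : RN | forall i, (`|tnth x i| <= r)%R]) `|u x|%:E < +oo)%E.

Definition in_expL2 (u : RN -> R) : Prop :=
  L1loc u /\ exists alpha : R, 0 < alpha /\ (expL2_modular (fun x => `|u x|%R) alpha < +oo)%E.

(* Biharmonic heat kernel E_t(x) = (2 pi)^{-N} int e^{-t|xi|^4} e^{i x.xi} dxi,
   split into real part (cos) and imaginary part (sin). *)
Definition biharm_kernel_re (t : R) (x : RN) : R :=
  (2 * pi) ^- N * Rintegral mu setT
    (fun xi => expR (- t * sqnormRN xi ^+ 2) * cos (dotRN x xi)).
Definition biharm_kernel_im (t : R) (x : RN) : R :=
  (2 * pi) ^- N * Rintegral mu setT
    (fun xi => expR (- t * sqnormRN xi ^+ 2) * sin (dotRN x xi)).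

(* e^{-t Delta^2} phi = E_t * phi, real and imaginary parts *)
Definition biharm_sg_re (t : R) (phi : RN -> R) (x : RN) : R :=
  Rintegral mu setT (fun y => biharm_kernel_re t (subRN x y) * phi y).
Definition biharm_sg_im (t : R) (phi : RN -> R) (x : RN) : R :=
  Rintegral mu setT (fun y => biharm_kernel_im t (subRN x y) * phi y).

Definition biharm_sg_diff_abs (t : R) (phi : RN -> R) (x : RN) : R :=
  Num.sqrt ((biharm_sg_re t phi x - phi x) ^+ 2 + biharm_sg_im t phi x ^+ 2).

End RN.

(* Main.v *)
Require Import Defs.
From HB Require Import structures.
From mathcomp Require Import all_boot all_order all_algebra.
From mathcomp Require Import all_classical all_reals all_analysis.
From mathcomp Require Import ring lra measurable_realfun.
Import Order.TTheory GRing.Theory Num.Theory.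
Local Open Scope classical_set_scope.
Local Open Scope ring_scope.
Section gen.
Context d (T : measurableType d) (R : realType) (mu : {measure set T -> \bar R}).
Local Open Scope ereal_scope.

Lemma le_integral_any (D : set T) (f g : T -> \bar R) :
  (forall x, D x -> 0 <= f x) -> (forall x, D x -> f x <= g x) ->
  \int[mu]_(x in D) f x <= \int[mu]_(x in D) g x.
Proof.
move=> f0 fg.
rewrite !ge0_integralE //; last by move=> x Dx; exact: le_trans (f0 x Dx) (fg x Dx).
apply: ereal_sup_le => _ [h hf <-]; exists h => // x.
apply: le_trans (hf x) _; rewrite /patch; case: ifP => // /[!inE] Dx; exact: fg.
Qed.

Lemma Rintegral_abs_le (D : set T) (h g : T -> R) (M : R) :
  (forall x, D x -> (`|h x| <= g x)%R) ->
  \int[mu]_(x in D) (g x)%:E <= M%:E ->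
  (`|Rintegral mu D h| <= M)%R.
Proof.
move=> hg gM.
have key : forall k : T -> \bar R, (forall x, D x -> 0 <= k x) ->
    (forall x, D x -> k x <= (g x)%:E) ->
    \int[mu]_(x in D) k x = (fine (\int[mu]_(x in D) k x))%:E /\
    (0 <= fine (\int[mu]_(x in D) k x))%R /\ (fine (\int[mu]_(x in D) k x) <= M)%R.
  move=> k k0 kg.
  have i0 := integral_ge0 mu k0.
  have iM : \int[mu]_(x in D) k x <= M%:E.
    apply: le_trans gM; exact: le_integral_any.
  have fk : \int[mu]_(x in D) k x \is a fin_num.
    by rewrite ge0_fin_numE // (le_lt_trans iM) ?ltry.
  split; first by rewrite fineK.
  by rewrite -!lee_fin fineK.
rewrite /Rintegral integralE.
have hp : forall x, D x -> (fun y => (h y)%:E)^\+ x <= (g x)%:E.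
  move=> x Dx; rewrite funeposE /= ge_max !lee_fin.
  have := hg x Dx; have := normr_ge0 (h x); have := ler_norm (h x).
  by move=> ???; apply/andP; split; lra.
have hn : forall x, D x -> (fun y => (h y)%:E)^\- x <= (g x)%:E.
  move=> x Dx; rewrite funenegE /= ge_max !lee_fin.
  have := hg x Dx; have := normr_ge0 (h x); have : (- h x <= `|h x|)%R by rewrite -normrN ler_norm.
  move=> ???; apply/andP; split; lra.
have K1 := key _ (fun x _ => funepos_ge0 (fun y => (h y)%:E) x) hp.
have [e1 [a0 aM]] := K1.
have [e2 [b0 bM]] := key _ (fun x _ => funeneg_ge0 (fun y => (h y)%:E) x) hn.
rewrite e1 e2 -EFinD /=.
move: a0 aM b0 bM.
set u := fine (\int[mu]_(x in D) (fun y => (h y)%:E)^\+ x).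
set v := fine (\int[mu]_(x in D) (fun y => (h y)%:E)^\- x) => ????.
rewrite ler_norml; apply/andP; split; lra.
Qed.


Lemma integral_le_series (f : T -> \bar R) (c : nat -> R) (A : nat -> set T) :
  (forall x, 0 <= f x) -> (forall k, (0 <= c k)%R) -> (forall k, measurable (A k)) ->
  (forall x, f x <= \sum_(k <oo) (c k * \1_(A k) x)%:E) ->
  \int[mu]_x f x <= \sum_(k <oo) ((c k)%:E * mu (A k)).
Proof.
move=> f0 c0 mA fle.
have := @le_integral_any setT f _ (fun x _ => f0 x) (fun x _ => fle x).
move=> /le_trans; apply.
rewrite integral_nneseries //.
- apply: lee_nneseries => [k _ _|k _].
    by apply: integral_ge0 => x _; rewrite lee_fin mulr_ge0.
  rewrite (eq_integral (fun x => (c k)%:E * (\1_(A k) x)%:E)); last by move=> x _; rewrite EFinM.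
  rewrite ge0_integralZl_EFin //.
  + by rewrite integral_indic // setIT.
  + by apply/measurable_EFinP; exact: measurable_indic.
- by move=> k; apply/measurable_EFinP; apply: measurable_funM => //; exact: measurable_indic.
- by move=> k x _; rewrite lee_fin mulr_ge0.
Qed.
End gen.

Lemma geo_le (R : realType) (K : R) : 0 <= K ->
  (\sum_(k <oo) ((K * (2^-1)^+k)%:E) <= (K*2)%:E)%E.
Proof.
move=> K0.
apply: lime_le.
  by apply: is_cvg_nneseries => k _; rewrite lee_fin mulr_ge0 // exprn_ge0.
apply: nearW => n.
rewrite sumEFin lee_fin.
have := @geometric_le_lim R n K (2^-1) K0.
rewrite !invr_gt0 ltr0n => /(_ isT).
have h : `|(2^-1 : R)| < 1 by rewrite ger0_norm ?invr_ge0 // invf_lt1 // ltr1n.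
move=> /(_ h).
have -> : (1 - 2^-1 : R)^-1 = 2 by field.
by rewrite /series /=.
Qed.

Lemma term_le_nneseries (R : realType) (u : nat -> \bar R) k :
  (forall n, (0 <= u n)%E) -> (u k <= \sum_(n <oo) u n)%E.
Proof.
move=> u0; apply: (@le_trans _ _ (\sum_(0 <= i < k.+1) u i)%E); last first.
  by apply: nneseries_lim_ge => n _ _; exact: u0.
rewrite big_nat_recr //= leeDr //; exact: sume_ge0.
Qed.

Lemma two_exp_le (R : realType) (k : nat) : (2 : R) ^+ k <= expR k%:R.
Proof.
rewrite -[k%:R]mulr1 expRM_natl; apply: lerXn2r => //; rewrite ?nnegrE //.
by have := expR_ge1Dx (1 : R); rewrite (_ : 1 + 1 = 2 :> R) //.
Qed.
Set Implicit Arguments. Unset Strict Implicit.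

Section main.
Variables (R : realType) (N : nat) (hN : (0 < N)%N).
Variable mu : {measure set (N.-tuple R) -> \bar R}.
Hypothesis hmu : is_lebesgue_RN mu.

Definition box (a b : 'I_N -> R) : set (N.-tuple R) :=
  [set x : N.-tuple R | forall i, a i < tnth x i <= b i].

Lemma box_meas a b : measurable (box a b).
Proof.
have -> : box a b = \bigcap_(i in [set: 'I_N]) (setT `&` ((fun x => tnth x i) @^-1` `]a i, b i])).
  apply/seteqP; split => x /=.
    by move=> h i _; split => //; rewrite /= in_itv /= h.
  by move=> h i; have [_ /=] := h i I; rewrite in_itv.
apply: fin_bigcap_measurable; first exact: finite_finset.
move=> i _; apply: measurable_tnth => //; exact: measurable_itv.
Qed.

Lemma mu_box a b : (forall i, a i <= b i) ->
  mu (box a b) = (\prod_(i < N) (b i - a i))%:E.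
Proof. exact: hmu. Qed.


Lemma sqnorm_ge (x : N.-tuple R) j : tnth x j ^+ 2 <= sqnormRN x.
Proof.
rewrite /sqnormRN /dotRN (bigD1 j) //= -expr2 lerDl.
by apply: sumr_ge0 => i _; rewrite -expr2 sqr_ge0.
Qed.

Lemma aux_bound (k : nat) :
  expR (- (N.+2%:R * k%:R)) * (k.+1%:R : R) ^+ N <= (2^-1) ^+ k.
Proof.
have h1 : (k.+1%:R : R) ^+ N <= expR (k * N)%:R.
  apply: le_trans (two_exp_le R (k * N)).
  rewrite exprM; apply: lerXn2r; rewrite ?nnegrE ?exprn_ge0 //.
  by rewrite -natrX ler_nat; apply: ltn_expl.
apply: le_trans (_ : expR (- (N.+2%:R * k%:R)) * expR (k * N)%:R <= _).
  by rewrite ler_wpM2l ?expR_ge0.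
rewrite -expRD (_ : - (N.+2%:R * k%:R) + (k * N)%:R = - (2 * k%:R)); last first.
  by rewrite natrM -addn2 natrD; ring.
apply: le_trans (_ : expR (- k%:R) <= _).
  by rewrite ler_expR lerN2 ler_peMl // ler1n.
rewrite expRN exprVn lef_pV2 ?posrE ?expR_gt0 ?exprn_gt0 //.
exact: two_exp_le.
Qed.

Lemma kernel_bound t : 0 < t -> exists M : R,
  (\int[mu]_xi (expR (- t * sqnormRN xi ^+ 2))%:E <= M%:E)%E.
Proof.
move=> t0.
pose T : R := 1 + N.+2%:R / t.
have T1 : 1 <= T by rewrite /T lerDl divr_ge0 // ltW.
have tT : N.+2%:R <= t * T.
  by rewrite /T mulrDr mulr1 mulrCA divff ?mulr1 ?gt_eqF // lerDr ltW.
pose B k := box (fun _ => - (T * k.+1%:R)) (fun _ => T * k.+1%:R).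
pose c k : R := expR (- (N.+2%:R * k%:R)).
exists ((2 * T) ^+ N * 2).
apply: le_trans (@integral_le_series _ _ _ mu _ c B _ _ _ _) _.
- by move=> x; rewrite lee_fin expR_ge0.
- by move=> k; rewrite expR_ge0.
- by move=> k; exact: box_meas.
- move=> xi.
  pose k0 := (\max_(i : 'I_N) Num.truncn (`|tnth xi i| / T))%N.
  apply: le_trans (@term_le_nneseries _ (fun k => (c k * \1_(B k) xi)%:E) k0 _); last first.
    by move=> n; rewrite lee_fin mulr_ge0 // ?expR_ge0 // indicE.
  have inB : B k0 xi.
    move=> i; have := @leq_bigmax _ (fun i => Num.truncn (`|tnth xi i| / T)) i.
    rewrite -/k0 truncn_le_nat ltr_pdivrMr ?(lt_le_trans ltr01 T1) //.
    by rewrite mulrC ltr_norml => /andP[h1 h2]; rewrite h1 ltW.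
  rewrite indicE mem_set // mulr1 lee_fin ler_expR.
  have [j hj] := @bigop.eq_bigmax _ (fun i => Num.truncn (`|tnth xi i| / T)) (ltac:(by rewrite card_ord)).
  have kj : k0%:R <= `|tnth xi j| / T.
    by rewrite /k0 hj truncn_le divr_ge0 // (le_trans ler01 T1).
  have Tk : T * k0%:R <= `|tnth xi j|.
    by rewrite mulrC -ler_pdivlMr ?(lt_le_trans ltr01 T1).
  have hs := sqnorm_ge xi j.
  rewrite -real_normK ?num_real // in hs.
  have k0ge : k0%:R <= (k0%:R : R) ^+ 4.
    case: (posnP k0) => [->|kp]; first by rewrite expr0n.
    by rewrite -natrX ler_nat -{1}(expn1 k0) leq_pexp2l.
  have k00 : 0 <= (k0%:R : R) by [].
  set s := sqnormRN xi in hs *.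
  set a := `|tnth xi j| in Tk hs.
  have a0 : 0 <= a := normr_ge0 _.
  have h1 : (T * k0%:R) ^+ 2 <= s by apply: le_trans hs; rewrite lerXn2r // ?nnegrE // mulr_ge0 // (le_trans ler01 T1).
  have h2 : (T * k0%:R) ^+ 4 <= s ^+ 2.
    rewrite (_ : 4 = 2 * 2)%N // exprM; apply: lerXn2r => //; rewrite nnegrE ?sqr_ge0 //.
    exact: le_trans (sqr_ge0 _) h1.
  have h3 : T <= T ^+ 4.
    exact: ler_eXnr.
  rewrite mulNr lerN2.
  apply: le_trans (_ : t * (T * k0%:R) ^+ 4 <= t * s ^+ 2); last by rewrite ler_pM2l.
  rewrite exprMn.
  apply: le_trans (_ : (t * T) * k0%:R <= _).
    by apply: ler_wpM2r.
  rewrite -mulrA ler_wpM2l ?(ltW t0) //.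
  by apply: ler_pM => //; exact: le_trans ler01 T1.
- apply: (@le_trans _ _ (\sum_(k <oo) (((2 * T) ^+ N * (2^-1) ^+ k)%:E))%E); last first.
    by apply: geo_le; rewrite exprn_ge0 // mulr_ge0 // (le_trans ler01 T1).
  apply: lee_nneseries => [k _ _|k _].
    by rewrite mule_ge0 // lee_fin expR_ge0.
  rewrite mu_box; last first.
    move=> _; have T0 := (le_trans ler01 T1).
    rewrite -subr_ge0 (_ : _ - _ = 2 * (T * k.+1%:R)); last by ring.
    by rewrite !mulr_ge0.
  rewrite -EFinM lee_fin prodr_const card_ord.
  rewrite (_ : T * k.+1%:R - - (T * k.+1%:R) = (2 * T) * k.+1%:R); last by ring.
  rewrite exprMn mulrCA ler_wpM2l ?exprn_ge0 ?mulr_ge0 ?(le_trans ler01 T1) //.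
  exact: aux_bound.
Qed.


Definition i0 : 'I_N := Ordinal hN.
Definition w (k : nat) : R := expR (- (2 * k%:R ^+ 2)) / 2.
Definition aD (k : nat) (i : 'I_N) : R := if i == i0 then k%:R else 0.
Definition bD (k : nat) (i : 'I_N) : R := if i == i0 then k%:R + w k else 1.
Definition D k := box (aD k) (bD k).
Definition Dall := \bigcup_k D k.
Definition u0 (x : N.-tuple R) : R := (Num.truncn (tnth x i0))%:R * \1_Dall x.

Lemma w_gt0 k : 0 < w k.
Proof. by rewrite /w divr_gt0 // expR_gt0. Qed.

Lemma w_le k : w k <= 2^-1.
Proof.
rewrite /w -[X in _ <= X]mul1r ler_pM2r ?invr_gt0 // -expR0 ler_expR lerNl oppr0.
Qed.

Lemma mu_D k : mu (D k) = (w k)%:E.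
Proof.
rewrite /D mu_box; last first.
  move=> i; rewrite /aD /bD; case: ifP => _; last exact: ler01.
  by rewrite lerDl ltW // w_gt0.
congr EFin; rewrite (bigD1 i0) //= big1 ?mulr1.
  by rewrite /aD /bD eqxx addrAC subrr add0r.
by move=> i /negbTE hi; rewrite /aD /bD hi subr0.
Qed.

Lemma D_trunc k x : D k x -> Num.truncn (tnth x i0) = k.
Proof.
move=> /(_ i0); rewrite /aD /bD eqxx => /andP[h1 h2].
apply: truncn_def; rewrite ltW //=.
apply: le_lt_trans h2 _; rewrite -addn1 natrD ltrD2l.
by apply: le_lt_trans (w_le k) _; rewrite invf_lt1 // ltr1n.
Qed.

Lemma u0_D k x : D k x -> u0 x = k%:R.
Proof.
move=> Dx; rewrite /u0 (D_trunc Dx) indicE mem_set ?mulr1 //.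
by exists k.
Qed.

Lemma u0_nD x : ~ Dall x -> u0 x = 0.
Proof. by move=> nD; rewrite /u0 indicE memNset ?mulr0. Qed.

Lemma u0_ge0 x : 0 <= u0 x.
Proof. by rewrite /u0 mulr_ge0 // indicE. Qed.

Lemma D_meas k : measurable (D k).
Proof. exact: box_meas. Qed.

Lemma Dall_meas : measurable Dall.
Proof. by apply: bigcupT_measurable => k; exact: D_meas. Qed.

Lemma u0_meas : measurable_fun setT u0.
Proof.
move=> _ Y mY.
have -> : setT `&` u0 @^-1` Y =
    \bigcup_k (D k `&` [set _ | Y k%:R]) `|` (~` Dall `&` [set _ | Y 0]).
  apply/seteqP; split => x /=.
    move=> [_ Yx]; have [[k _ Dk]|nD] := pselect (Dall x).
      by left; exists k => //; split => //; rewrite -(u0_D Dk).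
    by right; split => //; rewrite -(u0_nD nD).
  move=> [[k _ [Dk Yk]]|[nD Y0]]; split => //.
    by rewrite (u0_D Dk).
  by rewrite (u0_nD nD).
have cst_meas (P : Prop) : measurable [set _ : N.-tuple R | P].
  by have [p|np] := pselect P; [rewrite (_ : [set _ | P] = setT) //; apply/seteqP; split|
    rewrite (_ : [set _ | P] = set0) //; apply/seteqP; split].
apply: measurableU.
  by apply: bigcupT_measurable => k; apply: measurableI; [exact: D_meas|exact: cst_meas].
by apply: measurableI; [apply: measurableC; exact: Dall_meas|exact: cst_meas].
Qed.


Lemma expRNk_le (k : nat) : expR (- k%:R) <= (2^-1 : R) ^+ k.
Proof.
rewrite expRN exprVn lef_pV2 ?posrE ?expR_gt0 ?exprn_gt0 //.
exact: two_exp_le.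
Qed.

Lemma kw_le k : k%:R * w k <= (2^-1) ^+ k.
Proof.
apply: le_trans (expRNk_le k).
apply: le_trans (_ : expR k%:R * expR (- (2 * k%:R)) <= _).
  rewrite /w; apply: ler_pM => //.
    by have := expR_ge1Dx (k%:R : R); lra.
  apply: le_trans (_ : expR (- (2 * k%:R ^+ 2)) <= _).
    by rewrite ler_pdivrMr // ler_peMr ?expR_ge0 // ler1n.
  rewrite ler_expR lerN2 ler_pM2l // -natrX ler_nat.
  by case: (k) => // j; rewrite -{1}(expn1 j.+1) leq_pexp2l.
by rewrite -expRD ler_expR; lra.
Qed.

Lemma u0_series (F : R -> R) x : F 0 = 0 -> (forall k, 0 <= F k%:R) ->
  ((F (u0 x))%:E <= \sum_(k <oo) ((F k%:R * \1_(D k) x)%:E))%E.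
Proof.
move=> F0 Fk; have [[k _ Dk]|nD] := pselect (Dall x).
  rewrite (u0_D Dk).
  apply: le_trans (@term_le_nneseries _ (fun k => (F k%:R * \1_(D k) x)%:E) k _).
    by rewrite indicE mem_set // mulr1.
  by move=> n; rewrite lee_fin mulr_ge0 // indicE.
rewrite u0_nD // F0; apply: nneseries_ge0 => n _ _.
by rewrite lee_fin mulr_ge0 // indicE.
Qed.

Lemma int_u0 c : 0 <= c -> (\int[mu]_x (c * u0 x)%:E <= (c * 2)%:E)%E.
Proof.
move=> c0.
apply: le_trans (@integral_le_series _ _ _ mu _ (fun k => c * k%:R) D _ _ _ _) _.
- by move=> x; rewrite lee_fin mulr_ge0 // u0_ge0.
- by move=> k; rewrite mulr_ge0.
- exact: D_meas.
- by move=> x; apply: (@u0_series (fun y => c * y)) => [|k]; rewrite ?mulr0 ?mulr_ge0.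
apply: le_trans (@geo_le _ c c0).
apply: lee_nneseries => [k _ _|k _].
  by rewrite mule_ge0 // lee_fin mulr_ge0.
rewrite mu_D -EFinM lee_fin -mulrA ler_wpM2l //; exact: kw_le.
Qed.

Lemma modular_u0 : (expL2_modular mu (fun x => `|u0 x|%R) 1 <= 2%:E)%E.
Proof.
rewrite /expL2_modular.
rewrite (eq_integral (fun x => (expR (u0 x ^+ 2) - 1)%:E)); last first.
  by move=> x _; rewrite (ger0_norm (u0_ge0 x)) expr1n divr1.
rewrite -[2]mul1r.
apply: le_trans (@integral_le_series _ _ _ mu _ (fun k => expR (k%:R ^+ 2) - 1) D _ _ _ _) _.
- by move=> x; rewrite lee_fin subr_ge0 -expR0 ler_expR sqr_ge0.
- by move=> k; rewrite subr_ge0 -expR0 ler_expR sqr_ge0.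
- exact: D_meas.
- move=> x; apply: (@u0_series (fun y => expR (y ^+ 2) - 1)).
    by rewrite expr0n /= expR0 subrr.
  by move=> k; rewrite subr_ge0 -expR0 ler_expR sqr_ge0.
apply: le_trans (@geo_le _ 1 ler01).
apply: lee_nneseries => [k _ _|k _].
  by rewrite mule_ge0 // lee_fin subr_ge0 -expR0 ler_expR sqr_ge0.
rewrite mu_D -EFinM lee_fin mul1r.
apply: le_trans (expRNk_le k).
have kk : (k%:R : R) <= k%:R ^+ 2.
  by rewrite -natrX ler_nat; case: (k) => // j; rewrite -{1}(expn1 j.+1) leq_pexp2l.
rewrite /w.
have e1 := expR_gt0 (k%:R ^+ 2 : R).
have e2 := expR_gt0 (- (2 * k%:R ^+ 2) : R).
apply: le_trans (_ : expR (k%:R ^+ 2) * expR (- (2 * k%:R ^+ 2)) <= _).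
  by nra.
rewrite -expRD ler_expR.
lra.
Qed.


Lemma u0_in : in_expL2 mu u0.
Proof.
split; last first.
  exists 1; split => //; apply: le_lt_trans modular_u0 _; exact: ltry.
split; first exact: u0_meas.
move=> r r0; rewrite integral_mkcond.
apply: le_lt_trans (ltry (1 * 2 : R)).
apply: le_trans (int_u0 ler01).
apply: le_integral_any => x _.
  by rewrite /patch; case: ifP => _ //; rewrite lee_fin.
rewrite mul1r /patch; case: ifP => _; first by rewrite ger0_norm ?u0_ge0.
by rewrite lee_fin u0_ge0.
Qed.

Lemma sg_bound t : 0 < t -> exists Ms : R, forall x,
  `|biharm_sg_re mu t u0 x| <= Ms /\ `|biharm_sg_im mu t u0 x| <= Ms.
Proof.
move=> t0; have [M hM] := kernel_bound t0.
have M0 : 0 <= M.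
  rewrite -lee_fin; apply: le_trans hM; apply: integral_ge0 => x _.
  by rewrite lee_fin expR_ge0.
have c0 : 0 <= (2 * pi) ^- N :> R by rewrite invr_ge0 exprn_ge0 // mulr_ge0 // ltW // pi_gt0.
pose Kb := (2 * pi) ^- N * M.
have Kb0 : 0 <= Kb by rewrite mulr_ge0.
have Kgen : forall (f : R -> R), (forall y, `|f y| <= 1) -> forall z : N.-tuple R,
    `|(2 * pi) ^- N * Rintegral mu setT
       (fun xi => expR (- t * sqnormRN xi ^+ 2) * f (dotRN z xi))| <= Kb.
  move=> f f1 z; rewrite normrM (ger0_norm c0) ler_wpM2l //.
  apply: (@Rintegral_abs_le _ _ _ mu setT _ (fun xi => expR (- t * sqnormRN xi ^+ 2)) M _ hM).
  move=> xi _; rewrite normrM ger0_norm ?expR_ge0 //.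
  by rewrite -[X in _ <= X]mulr1 ler_wpM2l ?expR_ge0.
have Kre : forall z, `|biharm_kernel_re mu t z| <= Kb.
  apply: Kgen => y; rewrite ler_norml cos_le1 cos_geN1 //.
have Kim : forall z, `|biharm_kernel_im mu t z| <= Kb.
  apply: Kgen => y; rewrite ler_norml sin_le1 sin_geN1 //.
exists (Kb * 2) => x; split.
  apply: (@Rintegral_abs_le _ _ _ mu setT _ (fun y => Kb * u0 y)); last exact: int_u0.
  move=> y _; rewrite normrM (ger0_norm (u0_ge0 y)) ler_wpM2r ?u0_ge0 //.
apply: (@Rintegral_abs_le _ _ _ mu setT _ (fun y => Kb * u0 y)); last exact: int_u0.
move=> y _; rewrite normrM (ger0_norm (u0_ge0 y)) ler_wpM2r ?u0_ge0 //.
Qed.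


Lemma int_cD (c : R) k : 0 <= c ->
  (\int[mu]_x (c * \1_(D k) x)%:E = (c * w k)%:E)%E.
Proof.
move=> c0.
rewrite (eq_integral (fun x => (c%:E * (\1_(D k) x)%:E)%E)); last by move=> x _; rewrite EFinM.
rewrite ge0_integralZl_EFin //.
- by rewrite integral_indic ?setIT ?mu_D //; exact: D_meas.
- by apply/measurable_EFinP; apply: measurable_indic; exact: D_meas.
Qed.

Lemma final : exists C : R, 0 < C /\ forall t, 0 < t ->
  (C%:E <= expL2_norm mu (biharm_sg_diff_abs mu t u0))%E.
Proof.
exists (4^-1); split => // t t0.
have [Ms hMs] := sg_bound t0.
rewrite /expL2_norm; apply: le_ereal_inf_tmp => _ [a [a0 amod] <-]; rewrite lee_fin.
rewrite leNgt; apply/negP => alt.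
pose k := (Num.truncn (2 * `|Ms|)).+2.
have hk : 2 * `|Ms| + 1 < k%:R.
  by have h := truncnS_gt (2 * `|Ms|); rewrite /k mulrS; lra.
have Ms0 := normr_ge0 Ms.
have k2 : 2 <= (k%:R : R) by rewrite /k ler_nat.
pose c : R := expR (4 * k%:R ^+ 2) - 1.
have c0 : 0 <= c by rewrite subr_ge0 -expR0 ler_expR mulr_ge0 // sqr_ge0.
have hdiff : forall x, D k x -> k%:R / 2 <= biharm_sg_diff_abs mu t u0 x.
  move=> x Dx; rewrite /biharm_sg_diff_abs.
  have [hre _] := hMs x.
  set re := biharm_sg_re mu t u0 x in hre *.
  set im := biharm_sg_im mu t u0 x.
  apply: le_trans (_ : Num.sqrt ((re - u0 x) ^+ 2) <= _); last first.
    by rewrite ler_wsqrtr // lerDl sqr_ge0.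
  rewrite sqrtr_sqr (u0_D Dx).
  have := ler_norm re; have := ler_norm (- re); rewrite normrN.
  have := ler_norm (re - k%:R); have := ler_norm (- (re - k%:R)); rewrite normrN.
  have := ler_norm Ms; move=> ?????; lra.
have hpt : forall x, ((c * \1_(D k) x)%:E <=
    (expR (biharm_sg_diff_abs mu t u0 x ^+ 2 / a ^+ 2) - 1)%:E)%E.
  move=> x; rewrite lee_fin indicE.
  have e0 : 0 <= expR (biharm_sg_diff_abs mu t u0 x ^+ 2 / a ^+ 2) - 1.
    by rewrite subr_ge0 -expR0 ler_expR divr_ge0 ?sqr_ge0.
  case: (boolP (x \in D k)) => [/set_mem Dx|_]; last by rewrite mulr0.
  rewrite mulr1 lerD2r ler_expR.
  have := hdiff x Dx; set dd := biharm_sg_diff_abs mu t u0 x => hd.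
  have dd2 : k%:R ^+ 2 / 4 <= dd ^+ 2.
    apply: le_trans (_ : (k%:R / 2) ^+ 2 <= _).
      by rewrite expr_div_n; lra.
    have dd0 : 0 <= dd by apply: le_trans hd; rewrite divr_ge0.
    by rewrite lerXn2r ?nnegrE ?divr_ge0.
  have a2 : a ^+ 2 < 16^-1.
    by rewrite (_ : 16^-1 = 4^-1 ^+ 2 :> R); [rewrite ltrXn2r // ?nnegrE ltW|rewrite expr2; field].
  rewrite ler_pdivlMr ?exprn_gt0 //.
  apply: le_trans (_ : 4 * k%:R ^+ 2 * 16^-1 <= _).
    rewrite ler_wpM2l ?mulr_ge0 ?sqr_ge0 //; exact: ltW.
  lra.
have : (\int[mu]_x (c * \1_(D k) x)%:E <=
    expL2_modular mu (biharm_sg_diff_abs mu t u0) a)%E.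
  apply: le_integral_any => x _; last exact: hpt.
  by rewrite lee_fin mulr_ge0 // indicE.
rewrite int_cD // => /le_trans /(_ amod); rewrite lee_fin /c /w.
pose E : R := expR (2 * k%:R ^+ 2).
have E9 : (9 : R) <= E.
  apply: le_trans (expR_ge1Dx _); nra.
have hE4 : expR (4 * k%:R ^+ 2) = E * E by rewrite -expRD; congr expR; ring.
have hEN : expR (- (2 * k%:R ^+ 2)) * E = 1 by rewrite -expRD addNr expR0.
have F0 := expR_gt0 (- (2 * k%:R ^+ 2)).
rewrite hE4; nra.
Qed.

End main.

Theorem proposition3p8 (R : realType) (N : nat) (hN : (1 <= N)%N)
  (mu : {measure set (N.-tuple R) -> \bar R}) (hmu : is_lebesgue_RN mu) :
  exists u0 : N.-tuple R -> R, in_expL2 mu u0 /\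
  exists C : R, 0 < C /\
    forall t : R, 0 < t ->
      (C%:E <= expL2_norm mu (biharm_sg_diff_abs mu t u0))%E.
Proof.
exists (u0 hN); split.
  exact: u0_in.
exact: final.
Qed.
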